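(* Let $n>2$ be odd, let $\zeta\in\bar{\mathbb Q}$ be a primitive $n$-th root of unity, let $c$ be a positive rational number such that $x^n-c$ is irreducible over $\mathbb Q$, and let $a=c^{1/n}$ be the positive real root of $x^n-c$. Let $l$ be a positive divisor of $n$, $L=\mathbb Q(a)$ and $M=\mathbb Q(a,\zeta^l)$. Then $\rho_{\mathbb Q}(M,L)=n/l$ and $\tau_{\mathbb Q}(M,L)=l$; in particular $\tau_{\mathbb Q}(M,L)\,\rho_{\mathbb Q}(M,L)=[L:\mathbb Q]$.
   Context: For finite extensions $L/K$, $M/K$ inside a fixed algebraic closure: writing $L=K(\alpha)$ with minimal polynomial $f$ of $\alpha$ over $K$, the root capacity $\rho_K(M,L)$ is the number of roots of $f$ lying in $M$ (independent of the choice of $\alpha$). If $L_1,\dots,L_a$ are all the distinct subfields of $M$ isomorphic to $L$ over $K$, the intersection indicium is $\tau_K(M,L)=[L_1\cap\cdots\cap L_a:K]$ if $a\ge1$ and $0$ if $a=0$. *)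

(* Defs.v *)
From HB Require Import structures.
From mathcomp Require Import all_boot all_order all_algebra all_field.
From Stdlib Require Import ClassicalEpsilon.
Set Implicit Arguments. Unset Strict Implicit. Unset Printing Implicit Defensive.
Import Order.TTheory GRing.Theory Num.Theory.
Local Open Scope ring_scope.

(* All fields live inside a finite extension E of a base field F; for the
   main theorem F = rat, E is embedded in algC (the fixed algebraic closure),
   and every field involved (L, M, the conjugates of L inside M) lies in E. *)

Section RootCapacity.
Variables (F : fieldType) (E : fieldExtType F).

Definition is_roots_in (M : {vspace E}) (p : {poly E}) (s : seq E) : Prop :=
  uniq s /\ forall x, x \in s <-> (x \in M /\ root p x).

Definition num_roots_in (M : {vspace E}) (p : {poly E}) : nat :=
  size (epsilon (inhabits [::]) (is_roots_in M p)).

Definition prim_elt (K L : {vspace E}) : E :=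
  epsilon (inhabits 0) (fun alpha => <<K; alpha>>%VS = L).

Definition root_capacity (K M L : {vspace E}) : nat :=
  num_roots_in M (minPoly K (prim_elt K L)).

Definition iso_over (K L L' : {vspace E}) : Prop :=
  exists f : 'End(E), kHom K L f /\ (f @: L)%VS = L'.

Definition conj_in (K M L L' : {vspace E}) : Prop :=
  (L' <= M)%VS /\ iso_over K L L'.

Definition conj_intersection (K M L : {vspace E}) : {vspace E} :=
  epsilon (inhabits 0%VS) (fun I : {vspace E} =>
    forall x, x \in I <-> (forall L', conj_in K M L L' -> x \in L')).

Definition intersection_indicium (K M L : {vspace E}) : nat :=
  if excluded_middle_informative (exists L', conj_in K M L L')
  then \dim_K (conj_intersection K M L) else 0%N.

End RootCapacity.

(* Main.v *)
Require Import Defs.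
From HB Require Import structures.
From mathcomp Require Import all_boot all_order all_algebra all_field.
From mathcomp Require Import ring.
From Stdlib Require Import ClassicalEpsilon.
Import Order.TTheory GRing.Theory Num.Theory.
Set Implicit Arguments. Unset Strict Implicit. Unset Printing Implicit Defensive.
Lemma nt (N q : nat) : prime q -> (q %| N) -> odd N ->
  exists s, coprime (N %/ q * s + 1) N /\ ~~ (q %| s).
Proof.
move=> pq qN oN.
set x := N %/ q.
have DN : N = x * q by rewrite divnK.
have q_gt1 : 1 < q by apply: prime_gt1.
have oq : odd q := dvdn_odd qN oN.
have q_gt2 : 2 < q.
  rewrite ltn_neqAle q_gt1 andbT; apply/negP => /eqP q2; by move: oq; rewrite -q2.
have c1 s : coprime (x * s + 1) x.
  by rewrite -coprime_modl mulnC modnMDl coprime_modl coprime1n.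
have nq1 : ~~ (q %| 1) by rewrite dvdn1 neq_ltn q_gt1 orbT.
case: (boolP (q %| x + 1)) => h.
  exists 2; split.
    rewrite DN coprimeMr c1 /= coprime_sym prime_coprime //.
    have -> : x * 2 + 1 = x + (x + 1) by rewrite mulnS muln1 addnA.
    rewrite dvdn_addl //; apply/negP => qx.
    by move: h; rewrite dvdn_addr // (negbTE nq1).
  by apply/negP => /(dvdn_leq (isT : 0 < 2)); rewrite leqNgt q_gt2.
exists 1; split; last by [].
by rewrite DN coprimeMr c1 /= coprime_sym prime_coprime // muln1.
Qed.
Local Open Scope ring_scope.
Section Main.
Variables (E : fieldExtType rat) (iota : {rmorphism E -> algC})
    (n : nat) (c : rat) (a zeta : E) (l : nat).
Hypotheses (n_gt2 : (2 < n)%N) (n_odd : odd n) (prim : n.-primitive_root zeta)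
  (c_gt0 : 0 < c) (irr : irreducible_poly ('X^n - c%:P : {poly rat}))
  (an : a ^+ n = c%:A) (ia_gt0 : 0 < iota a) (l_gt0 : (0 < l)%N) (l_dvd : (l %| n)%N).

Local Notation p := ('X^n - c%:P : {poly rat}).
Local Notation pE := (map_poly (in_alg E) p).

Lemma n_gt0 : (0 < n)%N. Proof. exact: ltn_trans n_gt2. Qed.

Lemma pE_eq : pE = 'X^n - (c%:A)%:P.
Proof. by rewrite rmorphB /= map_polyXn map_polyC. Qed.

Lemma root_pE y : root pE y = (y ^+ n == c%:A).
Proof. by rewrite pE_eq rootE !hornerE subr_eq0. Qed.

Lemma p_monic : p \is monic.
Proof. by rewrite monicE lead_coefXnsubC ?n_gt0. Qed.

Lemma size_p : size p = n.+1.
Proof. by rewrite size_XnsubC ?n_gt0. Qed.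

Lemma minPoly_root y : root pE y -> minPoly 1 y = pE.
Proof.
move=> ry.
have /polyOver1P[q Dq] := minPolyOver 1 y.
have dv : minPoly 1 y %| pE by apply: minPoly_dvdp; rewrite ?alg_polyOver.
rewrite Dq dvdp_map in dv.
have szq : size q != 1%N.
  by rewrite -(size_map_poly (in_alg E)) -Dq size_minPoly.
case: irr => _ /(_ q szq dv) eqp.
have mq : q \is monic by rewrite -(map_monic (in_alg E)) -Dq monic_minPoly.
by rewrite Dq; move: eqp; rewrite eqp_monic ?p_monic // => /eqP ->.
Qed.

Lemma rootE_dvd y (R : {poly rat}) : root pE y ->
  root (map_poly (in_alg E) R) y = (p %| R).
Proof.
move=> ry; apply/idP/idP => [rR | dR].
  by rewrite -(dvdp_map (in_alg E)) -(minPoly_root ry) minPoly_dvdp ?alg_polyOver.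
rewrite -(dvdp_map (in_alg E)) in dR.
by case/dvdpP: dR => r ->; rewrite rootM ry orbT.
Qed.

Lemma root_a : root pE a. Proof. by rewrite root_pE an. Qed.

Lemma adeg y : root pE y -> adjoin_degree 1 y = n.
Proof. by move=> ry; apply: succn_inj; rewrite -size_minPoly minPoly_root // size_map_poly size_p. Qed.

Lemma iota_poly (R : {poly rat}) y :
  iota ((map_poly (in_alg E) R).[y]) = (map_poly ratr R).[iota y].
Proof.
rewrite -horner_map -map_poly_comp; congr (_.[_]); apply: eq_map_poly => r /=.
by rewrite alg_num_field fmorph_rat.
Qed.

Lemma iota_alg (r : rat) : iota r%:A = ratr r.
Proof. by rewrite alg_num_field fmorph_rat. Qed.

Lemma L_real x : x \in <<1; a>>%VS -> iota x \is Num.real.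
Proof.
case/Fadjoin1_polyP => R ->; rewrite iota_poly.
apply: rpred_horner; last by rewrite gtr0_real.
apply/polyOverP => i; rewrite coef_map /=.
by rewrite Creal_Crat // Crat_rat.
Qed.

Lemma RU_C (x : algC) m : odd m -> x \is Num.real -> x ^+ m = 1 -> x = 1.
Proof.
move=> om xR xm.
have m_gt0 : (0 < m)%N by case: m om {xm}.
have nx : `|x| = 1.
  by apply/eqP; rewrite -(pexpr_eq1 m_gt0) ?normr_ge0 // -normrX xm normr1.
have [x_ge0|x_lt0] := real_ge0P xR; first by rewrite -nx ger0_norm.
move: xm; rewrite -[x]opprK -(ltr0_norm x_lt0) nx exprNn expr1n.
rewrite -signr_odd om /= mulr1 expr1 => /eqP.
by rewrite -subr_eq0 -opprD oppr_eq0 -mulr2n mulrn_eq0 oner_eq0.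
Qed.

Lemma RU_E x m : odd m -> x \in <<1; a>>%VS -> x ^+ m = 1 -> x = 1.
Proof.
move=> om xL xm; apply: (fmorph_inj iota); rewrite rmorph1.
by apply: (RU_C om (L_real xL)); rewrite -rmorphXn xm rmorph1.
Qed.
Lemma c_neq0 : c != 0. Proof. by rewrite gt_eqF. Qed.

Lemma a_neq0 : a != 0.
Proof.
apply/eqP => a0; move: an; rewrite a0 expr0n gtn_eqF ?n_gt0 //= => /eqP.
by rewrite eq_sym scaler_eq0 oner_eq0 orbF (negbTE c_neq0).
Qed.

Lemma zeta_inj (i j : 'I_n) : zeta ^+ i = zeta ^+ j -> i = j.
Proof.
move/eqP; rewrite (eq_prim_root_expr prim) !modn_small // => /eqP H.
exact: val_inj.
Qed.

Lemma pE_fact : pE = \prod_(i < n) ('X - (a * zeta ^+ i)%:P).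
Proof.
set rs := [seq a * zeta ^+ i | i : 'I_n <- enum 'I_n].
have Hr : all (root pE) rs.
  apply/allP => _ /mapP[i _ ->]; rewrite root_pE exprMn an exprAC.
  by rewrite (prim_expr_order prim) expr1n mulr1.
have Hu : uniq_roots rs.
  rewrite uniq_rootsE map_inj_uniq ?enum_uniq // => i j /(mulfI a_neq0).
  exact: zeta_inj.
have dv := uniq_roots_dvdp Hr Hu.
have : size (\prod_(z <- rs) ('X - z%:P)) == size pE.
  by rewrite size_prod_XsubC size_map_poly size_p size_map size_enum_ord.
rewrite (dvdp_size_eqp dv) eqp_monic ?monic_prod_XsubC ?map_monic ?p_monic //.
by move/eqP <-; rewrite big_map big_enum.
Qed.
Lemma prod0 (s : seq 'I_n) : exists k,
  (\prod_(i <- s) ('X - (a * zeta ^+ i)%:P)).[0] =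
     (-1) ^+ size s * a ^+ size s * zeta ^+ k.
Proof.
elim: s => [|i s [k IH]]; first by exists 0%N; rewrite big_nil hornerC !expr0 !mulr1.
exists (i + k)%N; rewrite big_cons hornerM IH hornerXsubC /= !exprS exprD.
by rewrite sub0r; ring.
Qed.

Lemma lemG (K : {subfield E}) :
  exists k, a ^+ adjoin_degree K a * zeta ^+ k \in K.
Proof.
have dv : minPoly K a %| pE by apply: minPoly_dvdp; rewrite ?alg_polyOver ?root_a.
rewrite pE_fact in dv; have [m Hm] := dvdp_prod_XsubC dv.
move: Hm; rewrite eqp_monic ?monic_minPoly ?monic_prod_XsubC // => /eqP Hm.
have [k Hk] := prod0 (mask m (index_enum 'I_n)).
have szm : size (mask m (index_enum 'I_n)) = adjoin_degree K a.
  apply: succn_inj; rewrite -size_minPoly Hm size_prod_XsubC //.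
exists k.
have : (minPoly K a)`_0 \in K by apply/polyOverP/minPolyOver.
rewrite -horner_coef0 Hm Hk szm -mulrA.
move/(rpredM (rpredX (adjoin_degree K a) (rpredN1 K))).
have E1 (t : nat) (x : E) : (-1) ^+ t * ((-1) ^+ t * x) = x.
  by rewrite mulrA -exprMn mulrN1 opprK expr1n mul1r.
by rewrite E1.
Qed.
Lemma Qnu (nu : {rmorphism algC -> algC}) (R : {poly rat}) y :
  nu ((map_poly ratr R).[y]) = (map_poly ratr R).[nu y].
Proof.
rewrite -horner_map -map_poly_comp; congr (_.[_]); apply: eq_map_poly => r /=.
by rewrite fmorph_rat.
Qed.

Lemma Qconj (R : {poly rat}) (y : algC) :
  ((map_poly ratr R).[y])^* = (map_poly ratr R).[y^*].
Proof. exact: (Qnu Num.conj_op). Qed.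

Lemma conj_unity (u : algC) : u ^+ n = 1 -> u^* = u ^+ n.-1.
Proof.
move=> un.
have nu : `|u| = 1.
  by apply/eqP; rewrite -(pexpr_eq1 n_gt0) ?normr_ge0 // -normrX un normr1.
have u0 : u != 0.
  by apply/eqP => u0; move: un; rewrite u0 expr0n gtn_eqF ?n_gt0 //= => /eqP; rewrite eq_sym oner_eq0.
apply: (mulfI u0); rewrite -normCK nu expr1n -exprS prednK ?n_gt0 // un.
Qed.
Lemma pz : n.-primitive_root (iota zeta).
Proof. by rewrite fmorph_primitive_root. Qed.

Lemma cyc_fixed (P : {poly rat}) (b : algC) (r0 : rat) :
  b = (map_poly ratr P).[iota zeta] -> b \is Num.real -> b != 0 ->
  b ^+ n = ratr r0 -> exists r, b = ratr r.
Proof.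
move=> Db bR b0 bn.
set z := iota zeta.
have zn : z ^+ n = 1 by rewrite (prim_expr_order pz).
have Hk (k : 'I_n) : coprime k n -> (map_poly ratr P).[z ^+ k] = b.
  move=> ck; have [nu Hnu] := Qn_aut_exists ck.
  have nz : nu z = z ^+ k by apply: Hnu.
  have e1 : nu b = (map_poly ratr P).[z ^+ k] by rewrite Db Qnu nz.
  have zkn : (z ^+ k) ^+ n = 1 by rewrite exprAC zn expr1n.
  have nubR : nu b \is Num.real.
    apply/CrealP; rewrite {1}e1 Qconj conj_unity // -nz -rmorphXn -conj_unity //.
    by rewrite -Qnu -Qconj -Db conj_Creal.
  have x1 : nu b / b = 1.
    apply: (RU_C n_odd); first by rewrite rpred_div.
    by rewrite exprMn exprVn -rmorphXn bn fmorph_rat divff // -bn expf_neq0.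
  by rewrite -e1; have := congr1 (fun x => x * b) x1; rewrite mulfVK // mul1r.
pose Phi : {poly rat} := map_poly intr 'Phi_n.
have PhiC : map_poly ratr Phi = cyclotomic z n.
  rewrite -map_poly_comp (eq_map_poly (fun x => ratr_int _ x)).
  exact: Cintr_Cyclotomic pz.
have szPhi : size Phi = (totient n).+1.
  by rewrite -(size_map_poly (ratr : rat -> algC)) PhiC size_cyclotomic.
set P' := P %% Phi.
have HP' (k : 'I_n) : coprime k n -> (map_poly ratr P').[z ^+ k] = b.
  move=> ck; rewrite -(Hk k ck) [in RHS](divp_eq P Phi) rmorphD rmorphM /= hornerD hornerM.
  have : root (cyclotomic z n) (z ^+ k) by rewrite root_cyclotomic ?prim_root_exp_coprime // pz.
  by rewrite -PhiC => /rootP ->; rewrite mulr0 add0r.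
set D := map_poly ratr P' - b%:P.
have D0 : D = 0.
  have [//|nD] := eqVneq D 0.
  set rs := [seq z ^+ k | k : 'I_n <- [seq k : 'I_n <- index_enum 'I_n | coprime k n]].
  have Hr : all (root D) rs.
    apply/allP => w /mapP[k]; rewrite mem_filter => /andP[ck _] ->.
    by rewrite /D rootE !hornerE HP' // subrr.
  have Hu : uniq_roots rs.
    rewrite uniq_rootsE map_inj_in_uniq ?filter_uniq ?index_enum_uniq //.
    move=> i j _ _ /eqP; rewrite (eq_prim_root_expr pz) !modn_small // => /eqP H.
    exact: val_inj.
  have dv := uniq_roots_dvdp Hr Hu.
  rewrite big_map big_filter -/(cyclotomic z n) in dv.
  have := dvdp_leq nD dv; rewrite size_cyclotomic.
  have sP' : (size P' <= totient n)%N.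
    by rewrite -ltnS -szPhi ltn_modp -size_poly_gt0 szPhi.
  have t1 : (0 < totient n)%N by rewrite totient_gt0 n_gt0.
  have := size_polyD (map_poly ratr P') (- b%:P).
  rewrite size_polyN size_map_poly -/D.
  have := size_polyC_leq1 b.
  move=> h1 h2 h3; have := leq_trans h3 h2; rewrite leq_max.
  rewrite ltnNge sP' /= => h4; have := leq_trans h4 h1.
  by rewrite ltnS leqn0 => /eqP H; move: t1; rewrite H.
exists (P'`_0); move/eqP: D0; rewrite subr_eq0 => /eqP H.
by have := congr1 (fun q : {poly algC} => q`_0) H; rewrite coef_map coefC /= => ->.
Qed.
Lemma cyc_pow (t : nat) : (0 < t)%N -> a ^+ t \in <<1; zeta>>%VS -> (n <= t)%N.
Proof.
move=> t0 /Fadjoin1_polyP[P DP].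
have [r Hr] : exists r, iota (a ^+ t) = ratr r.
  apply: (@cyc_fixed P _ (c ^+ t)).
  - by rewrite DP iota_poly.
  - by rewrite rmorphXn rpredX // gtr0_real.
  - by rewrite fmorph_eq0 expf_neq0 // a_neq0.
  have e : (c%:A) ^+ t = (c ^+ t)%:A :> E by rewrite -(rmorphXn (in_alg E)).
  by rewrite -rmorphXn -exprM mulnC exprM an e iota_alg.
have at_eq : a ^+ t = r%:A by apply: (fmorph_inj iota); rewrite Hr iota_alg.
have : minPoly 1 a %| map_poly (in_alg E) ('X^t - r%:P).
  apply: minPoly_dvdp; first exact: alg_polyOver.
  by rewrite rmorphB /= map_polyXn map_polyC rootE !hornerE at_eq subrr.
rewrite minPoly_root ?root_a // dvdp_map => /dvdp_leq.
rewrite size_p size_XnsubC // ltnS; apply.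
by rewrite -size_poly_eq0 size_XnsubC.
Qed.
Lemma lemA (F : {subfield E}) : (F <= <<1; zeta>>)%VS -> adjoin_degree F a = n.
Proof.
move=> sF; have [k Hk] := lemG F.
set t := adjoin_degree F a in Hk *.
apply/eqP; rewrite eqn_leq; apply/andP; split.
  have dv : minPoly F a %| pE by apply: minPoly_dvdp; rewrite ?alg_polyOver ?root_a.
  have := dvdp_leq _ dv; rewrite size_minPoly size_map_poly size_p ltnS; apply.
  by rewrite map_poly_eq0 -size_poly_eq0 size_p.
apply: cyc_pow; first by [].
have zQ : zeta \in <<1; zeta>>%VS by apply: memv_adjoin.
have zkQ : zeta ^+ k \in <<1; zeta>>%AS by rewrite rpredX.
have := subvP sF _ Hk => H.
have -> : a ^+ t = (a ^+ t * zeta ^+ k) / zeta ^+ k.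
  rewrite mulfK // expf_neq0 //; apply/eqP => z0; have := prim_expr_order prim.
  by rewrite z0 expr0n gtn_eqF ?n_gt0 // => /eqP; rewrite eq_sym oner_eq0.
by rewrite rpred_div.
Qed.

Local Notation L := (<<1%VS; a>>%VS : {vspace E}).
Local Notation omega := (zeta ^+ l).
Local Notation M := (<<<<1%VS; a>>; zeta ^+ l>>%VS : {vspace E}).

Lemma M_adj (F : {subfield E}) : (<<1; omega>> <= F)%VS -> (F <= M)%VS ->
  (<<F; a>>%VS = M).
Proof.
move=> s1 s2; apply/eqP; rewrite eqEsubv; apply/andP; split.
  apply/FadjoinP; split => //.
  by apply: (subvP (subv_adjoin _ _)); apply: memv_adjoin.
apply/FadjoinP; split; last first.
  by apply: (subvP (subv_adjoin F a)); apply: (subvP s1); apply: memv_adjoin.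
by rewrite sub_adjoin1v memv_adjoin.
Qed.

Lemma zeta_in_M k : zeta ^+ k \in M -> zeta ^+ k \in <<1; omega>>%VS.
Proof.
move=> zkM.
set F1 := (<<1; omega>>%AS : {subfield E}).
set F2 := (<<F1; zeta ^+ k>>%AS : {subfield E}).
have zQ : zeta \in <<1; zeta>>%VS by apply: memv_adjoin.
have sF1 : (F1 <= <<1; zeta>>)%VS by rewrite sub_adjoin1v rpredX.
have sF2 : (F2 <= <<1; zeta>>)%VS by apply/FadjoinP; split; rewrite // rpredX.
have oM : omega \in M by apply: memv_adjoin.
have F1M : (F1 <= M)%VS by rewrite sub_adjoin1v.
have F2M : (F2 <= M)%VS by apply/FadjoinP.
have e1 := M_adj (subvv _) F1M.
have e2 := M_adj (subv_trans (subvv F1) (subv_adjoin _ _)) F2M.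
have d : \dim F1 = \dim F2.
  have := dim_Fadjoin F1 a; have := dim_Fadjoin F2 a.
  rewrite e1 e2 lemA // lemA // => -> /eqP.
  by rewrite eqn_mul2l gtn_eqF ?n_gt0 //= => /eqP.
have : F1 == F2 :> {vspace E} by rewrite eqEdim subv_adjoin d leqnn.
by move/eqP => ->; apply: memv_adjoin.
Qed.
Lemma w_unit : iota zeta != 0.
Proof.
apply/eqP => z0; have := prim_expr_order pz.
by rewrite z0 expr0n gtn_eqF ?n_gt0 // => /eqP; rewrite eq_sym oner_eq0.
Qed.

Lemma lemY k : zeta ^+ k \in <<1; omega>>%VS -> (l %| k)%N.
Proof.
move=> zk.
have [-> | k0] := posnP k; first by rewrite dvdn0.
set e := gcdn k l.
have el : (e %| l)%N := dvdn_gcdr k l.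
have ek : (e %| k)%N := dvdn_gcdl k l.
have oQ : omega \in <<1; omega>>%AS by apply: memv_adjoin.
have zk' : zeta ^+ k \in <<1; omega>>%AS by [].
have ze : zeta ^+ e \in <<1; omega>>%VS.
  case: (egcdnP l k0) => u v Huv _.
  have z0 : zeta != 0.
    by apply: contraNneq w_unit => ->; rewrite rmorph0.
  have -> : zeta ^+ e = (zeta ^+ k) ^+ u / omega ^+ v.
    rewrite -!exprM [(k * u)%N]mulnC Huv [(l * v)%N]mulnC exprD mulrAC divff.
      by rewrite mul1r.
    by rewrite expf_neq0.
  suff : (zeta ^+ k) ^+ u / omega ^+ v \in <<1; omega>>%AS by [].
  by apply: rpred_div; apply: rpredX.
have [el_eq | nel] := eqVneq e l; first by rewrite -el_eq.
have e0 : (0 < e)%N by rewrite gcdn_gt0 k0.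
set r := (l %/ e)%N.
have Dl : l = (r * e)%N by rewrite divnK.
have r1 : (1 < r)%N.
  rewrite ltn_neqAle lt0n; apply/andP; split.
    by apply/eqP => r1; move: nel; rewrite Dl -r1 mul1n eqxx.
  by apply/eqP => r0; move: l_gt0; rewrite Dl r0.
set q := pdiv r.
have pq : prime q := pdiv_prime r1.
have qr : (q %| r)%N := pdiv_dvd r.
have en : (e %| n)%N := dvdn_trans el l_dvd.
set N := (n %/ e)%N.
set m := (n %/ l)%N.
have Dn : n = (m * l)%N by rewrite divnK.
have DN : N = (m * r)%N.
  by rewrite /N Dn Dl mulnA mulnK.
have qN : (q %| N)%N by rewrite DN dvdn_mull.
have oN : odd N by apply: (dvdn_odd _ n_odd); rewrite /N Dn Dl mulnA mulnK // dvdn_mulr.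
have [s [cs nqs]] := nt pq qN oN.
set j := (N %/ q * s + 1)%N.
set w := iota zeta.
have px : N.-primitive_root (w ^+ e).
  have := exp_prim_root pz e; rewrite /N; congr (_.-primitive_root _).
  by congr (_ %/ _)%N; apply/gcdn_idPl.
set x := w ^+ e.
have [nu Hnu] := Qn_aut_exists cs.
have nx : nu x = x ^+ j by apply: Hnu; rewrite (prim_expr_order px).
case/Fadjoin1_polyP: ze => P DP.
have xP : x = (map_poly ratr P).[x ^+ r].
  by rewrite /x -exprM mulnC -Dl -!rmorphXn DP iota_poly.
have xr : (x ^+ j) ^+ r = x ^+ r.
  have h1 : (N %| N %/ q * s * r)%N.
    have Dr : r = (r %/ q * q)%N by rewrite divnK.
    have DNq : N = (N %/ q * q)%N by rewrite divnK.
    have -> : (N %/ q * s * r = N * (s * (r %/ q)))%N.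
      rewrite [in RHS]DNq {1}Dr.
      move: (N %/ q)%N (r %/ q)%N => y z; ring.
    exact: dvdn_mulr.
  have h2 : x ^+ (N %/ q * s * r) = 1 by apply/eqP; rewrite -(prim_order_dvd px).
  by rewrite -exprM /j mulnDl mul1n exprD h2 mul1r.
have : x ^+ j = x by rewrite -nx {1}xP Qnu rmorphXn nx xr -xP.
rewrite /j exprD expr1 => H.
have : x ^+ (N %/ q * s) = 1.
  have x0 : x != 0 by rewrite expf_neq0 // w_unit.
  by apply: (mulIf x0); rewrite mul1r.
move/eqP; rewrite -(prim_order_dvd px).
have DNq : N = (N %/ q * q)%N by rewrite divnK.
have N0 : (0 < N)%N by case: (N) oN.
have Nq0 : (0 < N %/ q)%N by rewrite divn_gt0 ?prime_gt0 // dvdn_leq.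
by rewrite {1}DNq dvdn_pmul2l // (negbTE nqs).
Qed.
Local Notation m := (n %/ l)%N.

Lemma m_gt0 : (0 < m)%N.
Proof. by rewrite divn_gt0 // dvdn_leq ?n_gt0. Qed.

Lemma Dn : n = (m * l)%N. Proof. by rewrite divnK. Qed.

Lemma prim_omega : m.-primitive_root omega.
Proof.
have := dvdn_prim_root prim (dvdn_div l_dvd).
have e : (n %/ m = l)%N by rewrite {1}Dn mulKn // m_gt0.
by rewrite e.
Qed.

Local Notation MA := (<<<<1%AS; a>>; zeta ^+ l>>%AS : {subfield E}).

Lemma aM : a \in M.
Proof. by apply: (subvP (subv_adjoin _ _)); apply: memv_adjoin. Qed.

Lemma oM : omega \in M.
Proof. exact: memv_adjoin. Qed.

Lemma root_aw j : root pE (a * omega ^+ j).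
Proof.
have w1 : omega ^+ n = 1 by rewrite -exprM mulnC exprM (prim_expr_order prim) expr1n.
by rewrite root_pE exprMn an [(omega ^+ j) ^+ n]exprAC w1 expr1n mulr1.
Qed.

Lemma aw_M j : a * omega ^+ j \in M.
Proof.
have : a * omega ^+ j \in MA by apply: rpredM; [exact: aM | apply: rpredX; exact: oM].
by [].
Qed.

Lemma roots_M y : root pE y -> y \in M -> exists2 j, (j < m)%N & y = a * omega ^+ j.
Proof.
rewrite root_pE => /eqP yn yM.
have : (y / a) ^+ n = 1 by rewrite exprMn exprVn yn an divff // -an expf_neq0 // a_neq0.
case/(prim_rootP prim) => i Hi.
have ziM : zeta ^+ i \in M.
  have : y / a \in MA by apply: rpred_div; [exact: yM | exact: aM].
  by rewrite Hi.
have /lemY li := zeta_in_M ziM.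
exists (i %/ l)%N.
  by rewrite ltn_divLR // -Dn.
by rewrite -exprM mulnC divnK // -Hi mulrC mulfVK // a_neq0.
Qed.
Lemma num_roots_eq (K : {vspace E}) (q : {poly E}) s :
  is_roots_in K q s -> num_roots_in K q = size s.
Proof.
move=> H; rewrite /num_roots_in.
have := epsilon_spec (inhabits [::]) (is_roots_in K q) (ex_intro _ s H).
case=> u' H'; case: H => u H.
apply: perm_size; apply: uniq_perm => // x.
by apply/idP/idP => [/H' /H | /H /H'].
Qed.

Lemma prim_spec : <<1; prim_elt 1 L>>%VS = L.
Proof. by apply: (epsilon_spec (inhabits 0) (fun al => <<1; al>>%VS = L)); exists a. Qed.

Lemma transfer (R : {poly rat}) y : root pE y ->
  root (map_poly (in_alg E) R) y = root (map_poly (in_alg E) R) a.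
Proof. by move=> ry; rewrite (rootE_dvd _ ry) (rootE_dvd _ root_a). Qed.

Lemma rho : root_capacity 1 M L = m.
Proof.
rewrite /root_capacity; set al := prim_elt 1 L.
have hal := prim_spec; rewrite -/al in hal.
have alL : al \in L by rewrite -hal memv_adjoin.
have aA : a \in <<1; al>>%VS by rewrite hal memv_adjoin.
case/Fadjoin1_polyP: alL => Qr DQ.
case/Fadjoin1_polyP: aA => Rr DR.
have /polyOver1P[mu Dmu] := minPolyOver 1 al.
have H2 (T : {poly rat}) b : root (map_poly (in_alg E) T) al ->
    root (minPoly 1 al) b -> root (map_poly (in_alg E) T) b.
  move=> rT rb; have : minPoly 1 al %| map_poly (in_alg E) T.
    by apply: minPoly_dvdp; rewrite ?alg_polyOver.
  by case/dvdpP => k ->; rewrite rootM rb orbT.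
have Pa y : root pE y -> root (minPoly 1 al) ((map_poly (in_alg E) Qr).[y]).
  move=> ry; rewrite Dmu /root -horner_comp -map_comp_poly.
  have := transfer (mu \Po Qr) ry; rewrite /root => ->.
  by rewrite map_comp_poly horner_comp -DQ -Dmu minPolyxx.
have Pb b : root (minPoly 1 al) b -> root pE ((map_poly (in_alg E) Rr).[b]).
  move=> rb; rewrite /root -horner_comp -map_comp_poly -/(root _ b).
  apply: H2 rb; rewrite /root map_comp_poly horner_comp -DR.
  exact: root_a.
have Pc b : root (minPoly 1 al) b ->
    (map_poly (in_alg E) Qr).[(map_poly (in_alg E) Rr).[b]] = b.
  move=> rb; apply/eqP; rewrite -subr_eq0.
  have : root (map_poly (in_alg E) (Qr \Po Rr - 'X)) b.
    apply: H2 rb; rewrite rootE rmorphB /= map_comp_poly map_polyX !hornerE horner_comp.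
    by rewrite -DR -DQ subrr.
  by rewrite rootE rmorphB /= map_comp_poly map_polyX !hornerE horner_comp.
have Pd y : root pE y ->
    (map_poly (in_alg E) Rr).[(map_poly (in_alg E) Qr).[y]] = y.
  move=> ry; apply/eqP; rewrite -subr_eq0.
  have : root (map_poly (in_alg E) (Rr \Po Qr - 'X)) y.
    rewrite transfer // rootE rmorphB /= map_comp_poly map_polyX !hornerE horner_comp.
    by rewrite -DQ -DR subrr.
  by rewrite rootE rmorphB /= map_comp_poly map_polyX !hornerE horner_comp.
have PM (T : {poly rat}) y : y \in M -> (map_poly (in_alg E) T).[y] \in M.
  move=> yM; have : (map_poly (in_alg E) T).[y] \in MA.
    by apply: rpred_horner; [exact: alg_polyOver | exact: yM].
  by [].
set s0 := [seq a * omega ^+ j | j <- seq.iota 0 m].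
have s0r y : y \in s0 -> root pE y /\ y \in M.
  by case/mapP => j _ ->; split; [exact: root_aw | exact: aw_M].
have us0 : uniq s0.
  rewrite map_inj_in_uniq ?iota_uniq // => i j; rewrite !mem_iota !add0n => im jm.
  move/(mulfI a_neq0)/eqP; rewrite (eq_prim_root_expr prim_omega) !modn_small //.
  by move/eqP.
have HS : is_roots_in M (minPoly 1 al) (map (fun y => (map_poly (in_alg E) Qr).[y]) s0).
  split.
    rewrite map_inj_in_uniq // => y1 y2 /s0r[r1 _] /s0r[r2 _] e.
    by rewrite -(Pd _ r1) e Pd.
  move=> x; split.
    by case/mapP => y /s0r[ry yM] ->; split; [exact: PM | exact: Pa].
  case=> xM rx; apply/mapP; exists ((map_poly (in_alg E) Rr).[x]); last by rewrite Pc.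
  have [j jm ->] := roots_M (Pb _ rx) (PM _ _ xM).
  by apply/mapP; exists j; rewrite // mem_iota add0n.
by rewrite (num_roots_eq HS) size_map size_map size_iota.
Qed.
Local Notation LA := (<<1%AS; a>>%AS : {subfield E}).

Lemma aL : a \in L. Proof. exact: memv_adjoin. Qed.

Lemma dimL : \dim L = n.
Proof. by rewrite (dim_Fadjoin 1%AS a) (adeg root_a) dimv1 muln1. Qed.

Lemma conj_exists y : root pE y -> exists f : 'End(E), kHom 1 L f /\ f a = y.
Proof.
move=> ry.
have r1 : root (map_poly \1%VF (minPoly 1 a)) y.
  by rewrite map_poly_id ?(minPoly_root root_a) // => u _; rewrite id_lfunE.
exists (kHomExtend 1%AS \1%VF a y); split.
  exact: (kHomExtendP (subvv _) (kHom1 1 1) r1).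
exact: (kHomExtend_val (kHom1 1 1) r1).
Qed.

Lemma img_conj f : kHom 1 L f -> (f @: L)%VS = <<1; f a>>%VS.
Proof.
move=> hf.
have fR (R : {poly rat}) : f (map_poly (in_alg E) R).[a] = (map_poly (in_alg E) R).[f a].
  rewrite (@kHom_horner _ _ 1%AS LA) //; last exact: aL.
    by rewrite (@kHom_poly_id _ _ 1%AS LA) // alg_polyOver.
  exact: alg_polyOver.
apply/vspaceP => x; apply/memv_imgP/Fadjoin1_polyP.
  by case=> u /Fadjoin1_polyP[R ->] ->; exists R; rewrite fR.
case=> R ->; exists ((map_poly (in_alg E) R).[a]); last by rewrite fR.
by apply/Fadjoin1_polyP; exists R.
Qed.

Lemma conj_char L' : conj_in 1 M L L' -> exists2 y, root pE y & L' = <<1; y>>%VS.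
Proof.
case=> sLM [f [hf <-]]; exists (f a); last exact: img_conj.
have := @kHom_root _ _ 1%AS LA f pE a hf (alg_polyOver _ _) aL root_a.
by rewrite (@kHom_poly_id _ _ 1%AS LA) // alg_polyOver.
Qed.

Lemma L_conj : conj_in 1 M L L.
Proof.
split; first exact: subv_adjoin.
by exists \1%VF; split; rewrite ?kHom1 // img_conj ?kHom1 // id_lfunE.
Qed.

Lemma aw_conj : conj_in 1 M L <<1; a * omega>>%VS.
Proof.
have [f [hf fa]] := conj_exists (root_aw 1).
rewrite expr1 in fa.
split; first by rewrite sub_adjoin1v; have := aw_M 1; rewrite expr1.
by exists f; split; rewrite // img_conj // fa.
Qed.

Local Notation K0 := (<<1; a ^+ m>>%VS : {vspace E}).
Local Notation K0A := (<<1%AS; a ^+ m>>%AS : {subfield E}).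

Lemma dimK0 : (l <= \dim K0)%N.
Proof.
have amL : a ^+ m \in L by apply: rpredX; exact: aL.
have e : <<K0A; a>>%VS = L.
  apply/eqP; rewrite eqEsubv; apply/andP; split.
    by apply/FadjoinP; split; [rewrite sub_adjoin1v | exact: aL].
  by rewrite sub_adjoin1v memv_adjoin.
have := dim_Fadjoin K0A a; rewrite e dimL => Dn'.
have : (adjoin_degree K0A a <= m)%N.
  have dv : minPoly K0A a %| 'X^m - (a ^+ m)%:P.
    apply: minPoly_dvdp; last by rewrite rootE !hornerE subrr.
    by rewrite rpredB ?polyOverXn // polyOverC memv_adjoin.
  have := dvdp_leq _ dv; rewrite size_minPoly size_XnsubC ?m_gt0 // ltnS; apply.
  by rewrite -size_poly_eq0 size_XnsubC ?m_gt0.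
rewrite -(leq_pmul2r (adim_gt0 K0A)) -Dn' {1}Dn leq_pmul2l ?m_gt0 //.
Qed.
Lemma raw : root pE (a * omega). Proof. by have := root_aw 1; rewrite expr1. Qed.

Lemma m_odd : odd m. Proof. exact: dvdn_odd (dvdn_div l_dvd) n_odd. Qed.

Lemma Kcap_eq : (L :&: <<1; a * omega>>)%VS = K0 /\ (\dim K0 <= l)%N.
Proof.
pose KA := (LA :&: <<1%AS; a * omega>>%AS)%AS.
have sKL : (KA <= L)%VS by apply: capvSl.
have sK2 : (KA <= <<1; a * omega>>)%VS by apply: capvSr.
set t := adjoin_degree KA a.
have [k Hk] := lemG KA; rewrite -/t in Hk.
have at0 : a ^+ t != 0 by rewrite expf_neq0 // a_neq0.
have zkL : zeta ^+ k \in L.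
  have -> : zeta ^+ k = (a ^+ t * zeta ^+ k) / a ^+ t by rewrite mulrAC divff // mul1r.
  have : (a ^+ t * zeta ^+ k) / a ^+ t \in LA.
    by apply: rpred_div; [exact: (subvP sKL) | apply: rpredX; exact: aL].
  by [].
have zk1 : zeta ^+ k = 1.
  apply: (RU_E n_odd zkL).
  by rewrite exprAC (prim_expr_order prim) expr1n.
rewrite zk1 mulr1 in Hk.
have omt : omega ^+ t \in <<1; a * omega>>%VS.
  have -> : omega ^+ t = (a * omega) ^+ t / a ^+ t by rewrite exprMn mulrC mulKf.
  have : (a * omega) ^+ t / a ^+ t \in <<1%AS; a * omega>>%AS.
    by apply: rpred_div; [apply: rpredX; exact: memv_adjoin | exact: (subvP sK2)].
  by [].
case/Fadjoin1_polyP: omt => R DR.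
have r1 : root (map_poly (in_alg E) (R ^+ m - 1)) (a * omega).
  rewrite rootE rmorphB rmorphXn rmorph1 /= !hornerE -DR [(omega ^+ t) ^+ m]exprAC.
  by rewrite (prim_expr_order prim_omega) expr1n subrr.
rewrite (transfer _ raw) in r1.
have Ra : (map_poly (in_alg E) R).[a] = 1.
  apply: (RU_E m_odd); first by apply/Fadjoin1_polyP; exists R.
  by move: r1; rewrite rootE rmorphB rmorphXn rmorph1 /= !hornerE subr_eq0 => /eqP.
have r2 : root (map_poly (in_alg E) (R - 1)) a.
  by rewrite rootE rmorphB rmorph1 /= !hornerE Ra subrr.
rewrite -(transfer _ raw) rootE rmorphB rmorph1 /= !hornerE -DR subr_eq0 in r2.
have mt : (m %| t)%N by rewrite (prim_order_dvd prim_omega).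
have mt' : (m <= t)%N by apply: dvdn_leq.
have eL : <<KA; a>>%VS = L.
  apply/eqP; rewrite eqEsubv; apply/andP; split.
    by apply/FadjoinP; split; [exact: sKL | exact: aL].
  by rewrite sub_adjoin1v memv_adjoin.
have dKA : (\dim KA <= l)%N.
  have := dim_Fadjoin KA a; rewrite eL dimL -/t => Dn'.
  rewrite -(leq_pmul2l m_gt0) -Dn.
  by rewrite [X in (_ <= X)%N]Dn' leq_pmul2r ?adim_gt0.
have sK0 : (K0 <= KA)%VS.
  rewrite subv_cap; apply/andP; split.
    by rewrite sub_adjoin1v; apply: rpredX; exact: aL.
  rewrite sub_adjoin1v.
  have -> : a ^+ m = (a * omega) ^+ m by rewrite exprMn (prim_expr_order prim_omega) mulr1.
  have : (a * omega) ^+ m \in <<1%AS; a * omega>>%AS by apply: rpredX; exact: memv_adjoin.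
  by [].
have : (K0 == KA :> {vspace E}).
  by rewrite eqEdim sK0 (leq_trans dKA dimK0).
by move/eqP => e; split; [rewrite e | rewrite e].
Qed.
Lemma I_char x : x \in K0 <-> (forall L', conj_in 1 M L L' -> x \in L').
Proof.
split.
  move=> xK0 L' hL'; have [y ry DL'] := conj_char hL'.
  have yM : y \in M by case: hL' => s _; apply: (subvP s); rewrite DL' memv_adjoin.
  have [j _ Dy] := roots_M ry yM.
  have ym : y ^+ m = a ^+ m.
    by rewrite Dy exprMn [(omega ^+ j) ^+ m]exprAC (prim_expr_order prim_omega) expr1n mulr1.
  have : (K0 <= L')%VS.
    rewrite DL' sub_adjoin1v -ym.
    have : y ^+ m \in <<1%AS; y>>%AS by apply: rpredX; exact: memv_adjoin.
    by [].
  by move/subvP; apply.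
move=> H; have [<- _] := Kcap_eq.
by rewrite memv_cap (H _ L_conj) (H _ aw_conj).
Qed.

Lemma tau : intersection_indicium 1 M L = l.
Proof.
rewrite /intersection_indicium; case: excluded_middle_informative => [h|h]; last first.
  by case: h; exists L; exact: L_conj.
have spec := epsilon_spec (inhabits 0%VS)
  (fun I : {vspace E} => forall x, x \in I <-> (forall L', conj_in 1 M L L' -> x \in L'))
  (ex_intro _ K0 I_char).
have -> : conj_intersection 1 M L = K0.
  apply/vspaceP => x; apply/idP/idP.
    by move/(spec x)/I_char.
  by move/I_char/(spec x).
have [_ d] := Kcap_eq.
by rewrite dimv1 divn1; apply/eqP; rewrite eqn_leq d dimK0.
Qed.

Lemma main_sec :
  [/\ root_capacity 1%VS M L = (n %/ l)%N,
      intersection_indicium 1%VS M L = l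
    & (intersection_indicium 1%VS M L * root_capacity 1%VS M L)%N
        = \dim_(1%VS : {vspace E}) L].
Proof.
split; [exact: rho | exact: tau |].
by rewrite rho tau dimv1 divn1 dimL mulnC -Dn.
Qed.
End Main.

Theorem mainTheorem15 (E : fieldExtType rat) (iota : {rmorphism E -> algC})
    (n : nat) (c : rat) (a zeta : E) (l : nat) :
  (2 < n)%N -> odd n ->
  n.-primitive_root zeta ->
  0 < c ->
  irreducible_poly ('X^n - c%:P : {poly rat}) ->
  a ^+ n = c%:A -> 0 < iota a ->
  (0 < l)%N -> (l %| n)%N ->
  let L := <<1%VS; a>>%VS in
  let M := <<<<1%VS; a>>; zeta ^+ l>>%VS in
  [/\ root_capacity 1%VS M L = (n %/ l)%N,
      intersection_indicium 1%VS M L = l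
    & (intersection_indicium 1%VS M L * root_capacity 1%VS M L)%N
        = \dim_(1%VS : {vspace E}) L].
Proof.
move=> H1 H2 H3 H4 H5 H6 H7 H8 H9 L M.
exact: (@main_sec E iota n c a zeta l H1 H2 H3 H4 H5 H6 H7 H8 H9).
Qed.
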